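(* Let $(u_S,u_R)$ be an environment satisfying scant-indifferences. If $(\sigma,\rho)$ is a cheap-talk equilibrium with $U_S(\sigma,\rho)$ equal to the persuasion payoff and $\rho$ is pure-on-path, then there exist a partitional messaging strategy $\hat\sigma$ and a pure action strategy $\hat\rho$ such that $|M_{\hat\sigma}|\le|A|$, $(\hat\sigma,\hat\rho)$ is a cheap-talk equilibrium, and $U_S(\hat\sigma,\hat\rho)$ equals the persuasion payoff.
   Context: $A=\{a_1,\dots,a_{|A|}\}$ and $\Omega$ are finite nonempty sets, $\mu_0$ a prior on $\Omega$ with $\mu_0(\omega)>0$ for all $\omega$, $M$ a finite message set with $|M|>\max\{|\Omega|,|A|\}$. An environment is a pair of functions $u_S,u_R:A\times\Omega\to[0,1]$. A messaging strategy is $\sigma:\Omega\to\Delta M$; an action strategy is $\rho:M\to\Delta A$; $\rho$ is pure if each $\rho(\cdot|m)$ is degenerate, and pure-on-path (given $\sigma$) if $\rho(\cdot|m)$ is degenerate for every $m\in M_\sigma=\{m:\sigma(m|\omega)>0\text{ for some }\omega\}$. $U_i(\sigma,\rho)=\sum_{\omega,m,a}\mu_0(\omega)\sigma(m|\omega)\rho(a|m)u_i(a,\omega)$. $(\sigma,\rho)$ is S-BR if $\sigma\in\arg\max_{\sigma'}U_S(\sigma',\rho)$, R-BR if $\rho\in\arg\max_{\rho'}U_R(\sigma,\rho')$; a cheap-talk equilibrium is both. The persuasion payoff is the maximum of $U_S$ over R-BR profiles. $\sigma$ is partitional if for every $\omega$ some $m$ has $\sigma(m|\omega)=1$. Scant-indifferences: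 with $\mathbf u_S(a)=u_S(a,\cdot)\in\mathbb R^{|\Omega|}$, $\mathbf u_R(a)=u_R(a,\cdot)$, for each $i$ the expanded-indifference matrix $T^i$ has $|\Omega|$ columns and rows $\mathbf u_S(a_j)-\mathbf u_S(a_i)$ ($j\ne i$), $\mathbf u_R(a_j)-\mathbf u_R(a_i)$ ($j\ne i$), and the rows of the $|\Omega|\times|\Omega|$ identity; the environment satisfies scant-indifferences if for each $i$ every matrix obtained from $T^i$ by deleting some rows has full rank. *)

(* Defs.v *)
From HB Require Import structures.
From mathcomp Require Import all_boot all_order all_algebra.
From mathcomp Require Import reals.
Set Implicit Arguments. Unset Strict Implicit. Unset Printing Implicit Defensive.
Import Order.TTheory GRing.Theory Num.Theory.
Local Open Scope ring_scope.

Section Game.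
Variables (R : realType) (A Omega M : finType).

Definition is_dist (T : finType) (p : T -> R) : Prop :=
  (forall t, 0 <= p t) /\ \sum_(t : T) p t = 1.

Definition degenerate (T : finType) (p : T -> R) : Prop :=
  exists t0 : T, forall t, p t = if t == t0 then 1 else 0.

(* messaging strategy sigma : Omega -> Delta M, written sigma w m = sigma(m|w) *)
Definition msg_strategy (sigma : Omega -> M -> R) : Prop :=
  forall w, is_dist (sigma w).

(* action strategy rho : M -> Delta A, written rho m a = rho(a|m) *)
Definition act_strategy (rho : M -> A -> R) : Prop :=
  forall m, is_dist (rho m).

Definition pure_strategy (rho : M -> A -> R) : Prop :=
  forall m, degenerate (rho m).

Definition on_path (sigma : Omega -> M -> R) : {set M} :=
  [set m | [exists w, 0 < sigma w m]].

Definition pure_on_path (sigma : Omega -> M -> R) (rho : M -> A -> R) : Prop :=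
  forall m, m \in on_path sigma -> degenerate (rho m).

Definition partitional (sigma : Omega -> M -> R) : Prop :=
  forall w, exists m, sigma w m = 1.

Definition payoff (mu0 : Omega -> R) (u : A -> Omega -> R)
    (sigma : Omega -> M -> R) (rho : M -> A -> R) : R :=
  \sum_(w : Omega) \sum_(m : M) \sum_(a : A)
     mu0 w * sigma w m * rho m a * u a w.

Definition S_BR (mu0 : Omega -> R) (uS : A -> Omega -> R)
    (sigma : Omega -> M -> R) (rho : M -> A -> R) : Prop :=
  msg_strategy sigma /\ act_strategy rho /\
  forall sigma', msg_strategy sigma' ->
    payoff mu0 uS sigma' rho <= payoff mu0 uS sigma rho.

Definition R_BR (mu0 : Omega -> R) (uR : A -> Omega -> R)
    (sigma : Omega -> M -> R) (rho : M -> A -> R) : Prop :=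
  msg_strategy sigma /\ act_strategy rho /\
  forall rho', act_strategy rho' ->
    payoff mu0 uR sigma rho' <= payoff mu0 uR sigma rho.

Definition cheap_talk_eq (mu0 : Omega -> R) (uS uR : A -> Omega -> R)
    (sigma : Omega -> M -> R) (rho : M -> A -> R) : Prop :=
  S_BR mu0 uS sigma rho /\ R_BR mu0 uR sigma rho.

Definition is_persuasion_payoff (mu0 : Omega -> R) (uS uR : A -> Omega -> R)
    (v : R) : Prop :=
  (exists sigma rho, R_BR mu0 uR sigma rho /\ payoff mu0 uS sigma rho = v) /\
  (forall sigma rho, R_BR mu0 uR sigma rho -> payoff mu0 uS sigma rho <= v).

(* Row labels of the expanded-indifference matrix T^i:
   inl (j, true)  : u_S(a_j) - u_S(a_i)   (only for j != i)
   inl (j, false) : u_R(a_j) - u_R(a_i)   (only for j != i)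
   inr w          : the row e_w of the |Omega| x |Omega| identity *)
Definition row_label := ((A * bool) + Omega)%type.

Definition row_allowed (i : A) (l : row_label) : bool :=
  match l with inl (j, _) => j != i | inr _ => true end.

Definition T_row (uS uR : A -> Omega -> R) (i : A) (l : row_label)
    (w : Omega) : R :=
  match l with
  | inl (j, true) => uS j w - uS i w
  | inl (j, false) => uR j w - uR i w
  | inr w' => if w == w' then 1 else 0
  end.

Definition T_sub (uS uR : A -> Omega -> R) (i : A) (S : {set row_label})
    : 'M[R]_(#|S|, #|Omega|) :=
  \matrix_(r < #|S|, c < #|Omega|)
     T_row uS uR i (enum_val r) (enum_val c).

Definition scant_indifferences (uS uR : A -> Omega -> R) : Prop :=
  forall (i : A) (S : {set row_label}),
    S \subset [set l | row_allowed i l] ->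
    \rank (T_sub uS uR i S) = minn #|S| #|Omega|.

End Game.
Arguments is_persuasion_payoff {R A Omega} M mu0 uS uR v.

(* Main.v *)
Require Import Defs.
From HB Require Import structures.
From mathcomp Require Import all_boot all_order all_algebra.
From mathcomp Require Import reals.
From mathcomp Require Import ring lra.
Import Order.TTheory GRing.Theory Num.Theory.
Local Open Scope ring_scope.
Section Helpers.
Set Implicit Arguments. Unset Strict Implicit.

Section Aux.
Variables (R : realType) (A Omega M : finType).
Variable (mu0 : Omega -> R).

Definition Vv (u : A -> Omega -> R) (rho : M -> A -> R) m w :=
  \sum_a rho m a * u a w.

Lemma sum_ind (T : finType) (j : T) (F : T -> R) :
  \sum_i (if i == j then 1 else 0) * F i = F j.
Proof.
rewrite (bigD1 j) //= eqxx mul1r big1 ?addr0 // => i /negbTE ->; by rewrite mul0r.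
Qed.

Lemma sum_ind1 (T : finType) (j : T) :
  \sum_i (if i == j then 1 else 0 : R) = 1.
Proof.
rewrite -[RHS](sum_ind j (fun _ => 1)); apply eq_bigr => i _; by rewrite mulr1.
Qed.

Lemma payoffE u sigma rho : payoff mu0 u sigma rho =
  \sum_w \sum_m mu0 w * sigma w m * Vv u rho m w.
Proof.
apply eq_bigr => w _; apply eq_bigr => m _; rewrite /Vv mulr_sumr.
apply eq_bigr => a _; by rewrite !mulrA.
Qed.

Lemma sbr_support u sigma rho w m m' :
  (forall w, 0 < mu0 w) -> S_BR mu0 u sigma rho -> 0 < sigma w m ->
  Vv u rho m' w <= Vv u rho m w.
Proof.
move=> hmu [hs [hr hbest]] hpos.
rewrite leNgt; apply/negP => hlt.
have hne : m != m' by apply/eqP => E; move: hlt; rewrite E ltxx.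
pose c := sigma w m.
pose d := fun m2 : M => ((if m2 == m' then 1 else 0) - (if m2 == m then 1 else 0) : R).
pose s2 := fun w2 m2 => sigma w2 m2 + (if w2 == w then c * d m2 else 0).
have hs2 : msg_strategy s2.
  move=> w2; split.
  - move=> m2; rewrite /s2; case: eqP => [->|_]; last by rewrite addr0; case: (hs w2).
    rewrite /d /c; case: (eqVneq m2 m) => [->|hm2].
      rewrite (negbTE hne); lra.
    case: (hs w) => h0 _; have := h0 m2; case: (m2 == m'); lra.
  - rewrite /s2 big_split /=; case: (hs w2) => _ ->.
    case: eqP => _; last by rewrite big1 ?addr0.
    rewrite -mulr_sumr /d sumrB !sum_ind1; lra.
have := hbest s2 hs2; rewrite !payoffE.
have -> : \sum_w2 \sum_m2 mu0 w2 * s2 w2 m2 * Vv u rho m2 w2 =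
   \sum_w2 \sum_m2 mu0 w2 * sigma w2 m2 * Vv u rho m2 w2 +
   \sum_w2 \sum_m2 mu0 w2 * (if w2 == w then c * d m2 else 0) * Vv u rho m2 w2.
  rewrite -big_split; apply eq_bigr => w2 _; rewrite -big_split; apply eq_bigr => m2 _ /=.
  rewrite /s2 mulrDr mulrDl; done.
have -> : \sum_w2 \sum_m2 mu0 w2 * (if w2 == w then c * d m2 else 0) * Vv u rho m2 w2 =
  mu0 w * c * (\sum_m2 (if m2 == m' then 1 else 0) * Vv u rho m2 w -
               \sum_m2 (if m2 == m then 1 else 0) * Vv u rho m2 w).
  rewrite (bigD1 w) //= eqxx [X in _ + X]big1 ?addr0; last first.
    move=> w2 /negbTE ->; apply big1 => m2 _; by rewrite mulr0 mul0r.
  rewrite -sumrB mulr_sumr; apply eq_bigr => m2 _; rewrite /d /c /=. move: (if m2 == m' then _ else _) (if m2 == m then _ else _) => p q; ring.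
rewrite !sum_ind.
have hp : 0 < mu0 w * c by apply mulr_gt0.
have hq : 0 < mu0 w * c * (Vv u rho m' w - Vv u rho m w).
  apply mulr_gt0 => //; lra.
lra.
Qed.

End Aux.

Lemma scant_strict (R : realType) (A Omega : finType) (uS uR : A -> Omega -> R)
  (hs : scant_indifferences uS uR) a b w : a != b -> uS b w != uS a w.
Proof.
move=> hab; apply/negP => /eqP E.
pose S : {set row_label A Omega} := inl (b, true) |: ((@inr (A * bool) Omega) @: [set~ w]).
have hsub : S \subset [set l | row_allowed a l].
  apply/subsetP => l; rewrite !inE => /orP [/eqP -> | /imsetP [w' _ ->]] //=.
  by rewrite eq_sym.
have hr := hs a S hsub.
have hn : (0 < #|Omega|)%N by apply/card_gt0P; exists w.
have hcard : #|S| = #|Omega|.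
  rewrite cardsU1 card_imset; last by move=> x y [].
  rewrite cardsC1.
  have -> : inl (b, true) \notin (@inr (A * bool) Omega) @: [set~ w].
    by apply/imsetP => [[w' _]].
  by rewrite add1n prednK.
have {}hr : \rank (T_sub uS uR a S) = #|Omega| by rewrite hr hcard minnn.
set T := T_sub uS uR a S in hr.
have hcol : forall r, T r (enum_rank w) = 0.
  move=> r; rewrite /T /T_sub mxE enum_rankK.
  have := enum_valP r; case: (enum_val r) => [[j [|]] | w'] /=; rewrite !inE.
  - case/orP => [/eqP [->]|/imsetP [? _ //]]; by rewrite E subrr.
  - case/orP => [/eqP //|/imsetP [? _ //]].
  - case/orP => [/eqP //|/imsetP [w2]]; rewrite !inE => hw2 [->].
    by rewrite eq_sym (negbTE hw2).
have hk : ((delta_mx (0 : 'I_1) (enum_rank w) : 'rV[R]_#|Omega|) <= kermx T^T)%MS.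
  apply/sub_kermxP; rewrite -rowE; apply/rowP => j; rewrite !mxE; have := hcol j; by rewrite /T /T_sub mxE.
have := mxrankS hk; rewrite mxrank_ker mxrank_tr mxrank_delta hr subnn.
by [].
Qed.

End Helpers.

Theorem lemma5 (R : realType) (A Omega M : finType)
    (mu0 : Omega -> R) (uS uR : A -> Omega -> R)
    (hA : (0 < #|A|)%N) (hOmega : (0 < #|Omega|)%N)
    (hM : (maxn #|Omega| #|A| < #|M|)%N)
    (hmu0pos : forall w, 0 < mu0 w) (hmu0sum : \sum_(w : Omega) mu0 w = 1)
    (huS : forall a w, 0 <= uS a w <= 1) (huR : forall a w, 0 <= uR a w <= 1)
    (hscant : scant_indifferences uS uR)
    (sigma : Omega -> M -> R) (rho : M -> A -> R)
    (heq : cheap_talk_eq mu0 uS uR sigma rho)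
    (hpers : is_persuasion_payoff M mu0 uS uR (payoff mu0 uS sigma rho))
    (hpop : pure_on_path sigma rho) :
  exists (sigma' : Omega -> M -> R) (rho' : M -> A -> R),
    [/\ msg_strategy sigma' /\ partitional sigma',
        act_strategy rho' /\ pure_strategy rho',
        (#|on_path sigma'| <= #|A|)%N,
        cheap_talk_eq mu0 uS uR sigma' rho'
      & is_persuasion_payoff M mu0 uS uR (payoff mu0 uS sigma' rho')].
Proof.
case/card_gt0P: hA => a0 _.
case/card_gt0P: hOmega => w0 _.
have leAM : (#|A| <= #|M|)%N.
  by apply: ltnW; apply: leq_ltn_trans hM; rewrite leq_maxr.
pose f (a : A) : M := enum_val (widen_ord leAM (enum_rank a)).
have finj : injective f.
  move=> x y /enum_val_inj [] /ord_inj /enum_rank_inj //.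
have [[hsig [hrho hSbest]] [_ [_ hRbest]]] := heq.
pose g (m : M) : A := odflt a0 [pick a | rho m a == 1].
pose msgw (w : Omega) : M := odflt (f a0) [pick m | 0 < sigma w m].
pose act w := g (msgw w).
have hz : forall w m, ~~ (0 < sigma w m) -> sigma w m = 0.
  move=> w m hn; case: (hsig w) => h0 _; have := h0 m.
  by rewrite le_eqVlt (negbTE hn) orbF => /eqP <-.
have F1 : forall w, 0 < sigma w (msgw w).
  move=> w; rewrite /msgw; case: pickP => [m //|hnone].
  case: (hsig w) => _ hs1; exfalso; move: hs1.
  rewrite big1 => [/eqP|m _]; first by rewrite eq_sym oner_eq0.
  by apply: hz; rewrite hnone.
have onp : forall w m, 0 < sigma w m -> m \in on_path sigma.
  by move=> w m hp; rewrite inE; apply/existsP; exists w.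
have F2 : forall m, m \in on_path sigma -> forall a, rho m a = if a == g m then 1 else 0.
  move=> m hm; case: (hpop m hm) => t0 ht.
  rewrite /g; case: pickP => [a' /eqP ha'|hnone] /=.
    have E : a' = t0.
      apply/eqP; move: ha'; rewrite ht; case: (a' == t0) => //.
      by move/eqP; rewrite eq_sym oner_eq0.
    by rewrite E.
  by move: (hnone t0); rewrite ht eqxx eqxx.
have F3 : forall (u : A -> Omega -> R) (m : M) (w : Omega), m \in on_path sigma -> Vv u rho m w = u (g m) w.
  move=> u m w hm; rewrite /Vv -[RHS](sum_ind (g m) (fun a => u a w)).
  by apply eq_bigr => a _; rewrite F2.
have hSBR : S_BR mu0 uS sigma rho by [].
have K : forall w m, 0 < sigma w m -> g m = act w.
  move=> w m hp.
  have h1 := sbr_support (msgw w) hmu0pos hSBR hp.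
  have h2 := sbr_support m hmu0pos hSBR (F1 w).
  rewrite !F3 in h1 h2; try by [apply: onp hp | apply: onp (F1 w)].
  apply/eqP; apply/negPn/negP => hne.
  have := scant_strict hscant w hne; rewrite /act; apply/negPn.
  by rewrite eq_le h1 h2.
pose h (m : M) : A := if [pick w | m == f (act w)] is Some w then act w else act w0.
pose s' (w : Omega) (m : M) : R := if m == f (act w) then 1 else 0.
pose pm (b : A) (a : A) : R := if a == b then 1 else 0.
pose r' (m : M) (a : A) : R := pm (h m) a.
have hf : forall w, h (f (act w)) = act w.
  move=> w; rewrite /h; case: pickP => [w' /eqP E | hn]; first by apply: finj.
  by move: (hn w); rewrite eqxx.
have IC : forall w w', uS (act w') w <= uS (act w) w.
  move=> w w'; have := sbr_support (msgw w') hmu0pos hSBR (F1 w).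
  by rewrite !F3 //; [apply: onp (F1 w) | apply: onp (F1 w')].
have L1 : forall (u : A -> Omega -> R) (Phi : M -> A -> R) (Psi : A -> A -> R),
    (forall w m a, 0 < sigma w m -> Phi m a = Psi (act w) a) ->
    payoff mu0 u sigma Phi = \sum_w \sum_a mu0 w * Psi (act w) a * u a w.
  move=> u Phi Psi hPhi; apply eq_bigr => w _.
  transitivity (\sum_m sigma w m * \sum_a mu0 w * Psi (act w) a * u a w).
    apply eq_bigr => m _; case: (boolP (0 < sigma w m)) => hp.
      rewrite mulr_sumr; apply eq_bigr => a _; rewrite (hPhi w m a hp); ring.
    rewrite hz // mul0r; apply big1 => a _; by rewrite mulr0 !mul0r.
  by rewrite -mulr_suml; case: (hsig w) => _ ->; rewrite mul1r.
have L2 : forall (u : A -> Omega -> R) (Phi : M -> A -> R),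
    payoff mu0 u s' Phi = \sum_w \sum_a mu0 w * Phi (f (act w)) a * u a w.
  move=> u Phi; apply eq_bigr => w _.
  rewrite (bigD1 (f (act w))) //= [X in _ + X]big1 ?addr0; last first.
    move=> m hm; apply big1 => a _; by rewrite /s' (negbTE hm) mulr0 !mul0r.
  by apply eq_bigr => a _; rewrite /s' eqxx mulr1.
have hPay : forall u, payoff mu0 u s' r' = \sum_w \sum_a mu0 w * pm (act w) a * u a w.
  by move=> u; rewrite L2; apply eq_bigr => w _; apply eq_bigr => a _; rewrite /r' hf.
have hPayO : forall u, payoff mu0 u sigma rho = \sum_w \sum_a mu0 w * pm (act w) a * u a w.
  move=> u; apply: L1 => w m a hp; rewrite F2; last exact: onp hp.
  by rewrite (K w m hp).
have hs' : msg_strategy s'.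
  move=> w; split; first by move=> m; rewrite /s'; case: eqP.
  exact: sum_ind1.
have hr' : act_strategy r'.
  move=> m; split; first by move=> a; rewrite /r' /pm; case: eqP.
  exact: sum_ind1.
exists s', r'; split.
- split=> // w; exists (f (act w)); by rewrite /s' eqxx.
- split=> // m; exists (h m) => a //.
- have sub : on_path s' \subset f @: [set: A].
    apply/subsetP => m; rewrite inE => /existsP [w]; rewrite /s'.
    case: eqP => [-> _|_]; last by rewrite ltxx.
    by apply: imset_f; rewrite inE.
  apply: leq_trans (subset_leq_card sub) _.
  by apply: leq_trans (leq_imset_card _ _) _; rewrite cardsT.
- split.
  + split=> //; split=> // s2 hs2.
    rewrite hPay payoffE.
    apply: ler_sum => w _.
    have -> : \sum_a mu0 w * pm (act w) a * uS a w = mu0 w * uS (act w) w.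
      rewrite -[RHS](sum_ind (act w) (fun a => mu0 w * uS a w)).
      by apply eq_bigr => a _; rewrite /pm; ring.
    rewrite -[X in _ <= X]mulr1; case: (hs2 w) => h0 <-; rewrite mulr_sumr.
    apply: ler_sum => m _.
    have -> : Vv uS r' m w = uS (h m) w.
      by rewrite /Vv /r' /pm (sum_ind (h m) (fun a => uS a w)).
    have [w' ->] : exists w', h m = act w'.
      by rewrite /h; case: pickP => [w' _|_]; [exists w' | exists w0].
    have := IC w w'; have := h0 m; have := hmu0pos w; move=> p1 p2 p3.
    rewrite -mulrA -[X in _ <= X]mulrA; apply: ler_wpM2l; first exact: ltW.
    rewrite mulrC; exact: ler_wpM2r.
  + split=> //; split=> // rho2 hrho2.
    rewrite hPay L2.
    have hrho3 : act_strategy (fun m => rho2 (f (g m))) by move=> m; exact: hrho2.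
    have := hRbest _ hrho3.
    rewrite (L1 _ _ (fun b => rho2 (f b))); last first.
      by move=> w m a hp /=; rewrite (K w m hp).
    by rewrite hPayO.
- by rewrite hPay -hPayO.
Qed.
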